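(* Let $\pi:(X,T)\to(Y,S)$ be a factor map and let $y_0\in\mathrm{Eq}(Y,S)$ be a minimal point of $(Y,S)$ such that $\pi^{-1}(y_0)=\{x_0\}$. Then $x_0\in\mathrm{Eq}_{\mathrm{syn}}(X,T)$. In particular, $(X,T)$ is not thickly sensitive.
   Context: Systems: compact metric space with continuous surjection; factor map: continuous surjection intertwining the maps. $\mathrm{Eq}(Y,S)$ is the set of equicontinuity points: $y$ such that for every $\varepsilon>0$ there is $\delta>0$ with $\varrho_Y(y,y')<\delta\Rightarrow\varrho_Y(S^ny,S^ny')<\varepsilon$ for all $n\in\mathbb N$. A point is minimal if it lies in a minimal subset (a nonempty closed invariant set all of whose orbits are dense in it). $S_T(U,\delta)=\{n\in\mathbb{N}:\exists x_1,x_2\in U,\ \varrho(T^nx_1,T^nx_2)>\delta\}$, $J_T(U,\delta)=\mathbb N\setminus S_T(U,\delta)$. $\mathrm{Eq}_{\mathrm{syn}}(X,T)$: points $x$ such that for every $\varepsilon>0$ there is a neighborhood $U$ of $x$ with $J_T(U,\varepsilon)$ syndetic (bounded gaps). Thickly sensitive: there is $\delta>0$ with $S_T(U,\delta)$ thick (arbitrarily long blocks of consecutive integers) for every opene $U$. *)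

(* Defs.v *)
From Stdlib Require Import Reals List.
Open Scope R_scope.
Set Implicit Arguments.

Record MetricSpace := {
  carrier :> Type;
  dist : carrier -> carrier -> R;
  dist_nonneg : forall x y, 0 <= dist x y;
  dist_eq0 : forall x y, dist x y = 0 <-> x = y;
  dist_sym : forall x y, dist x y = dist y x;
  dist_tri : forall x y z, dist x z <= dist x y + dist y z
}.

Arguments dist {m} _ _.

Section Defs.
Variable X : MetricSpace.

Definition is_open (U : X -> Prop) : Prop :=
  forall x, U x -> exists r, 0 < r /\ forall y, dist x y < r -> U y.

Definition is_closed (A : X -> Prop) : Prop :=
  is_open (fun x => ~ A x).

Definition compact_space : Prop :=
  forall (I : Type) (U : I -> X -> Prop),
    (forall i, is_open (U i)) ->
    (forall x, exists i, U i x) ->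
    exists l : list I, forall x, exists i, In i l /\ U i x.

Definition neighborhood (U : X -> Prop) (x : X) : Prop :=
  exists V, is_open V /\ V x /\ forall y, V y -> U y.

Definition opene (U : X -> Prop) : Prop := is_open U /\ exists x, U x.

Definition iter (T : X -> X) (n : nat) (x : X) : X := Nat.iter n T x.

End Defs.
Arguments iter {X} T n x.
Arguments is_closed {X} A.
Arguments is_open {X} U.
Arguments neighborhood {X} U x.
Arguments opene {X} U.

Definition continuous {X Y : MetricSpace} (f : X -> Y) : Prop :=
  forall x eps, 0 < eps -> exists delta, 0 < delta /\
    forall x', dist x x' < delta -> dist (f x) (f x') < eps.

Definition surjective {A B : Type} (f : A -> B) : Prop :=
  forall b, exists a, f a = b.

Definition TDS {X : MetricSpace} (T : X -> X) : Prop :=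
  compact_space X /\ continuous T /\ surjective T.

Definition factor_map {X Y : MetricSpace} (T : X -> X) (S : Y -> Y) (pi : X -> Y) : Prop :=
  continuous pi /\ surjective pi /\ forall x, pi (T x) = S (pi x).

Definition Eq_pt {Y : MetricSpace} (S : Y -> Y) (y : Y) : Prop :=
  forall eps, 0 < eps -> exists delta, 0 < delta /\
    forall y', dist y y' < delta -> forall n : nat, dist (iter S n y) (iter S n y') < eps.

Definition invariant {X : MetricSpace} (T : X -> X) (M : X -> Prop) : Prop :=
  forall x, M x -> M (T x).

Definition orbit_dense_in {X : MetricSpace} (T : X -> X) (x : X) (M : X -> Prop) : Prop :=
  forall z, M z -> forall eps, 0 < eps -> exists n : nat, dist (iter T n x) z < eps.

Definition minimal_subset {X : MetricSpace} (T : X -> X) (M : X -> Prop) : Prop :=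
  (exists x, M x) /\ is_closed M /\ invariant T M /\
  forall x, M x -> orbit_dense_in T x M.

Definition minimal_point {X : MetricSpace} (T : X -> X) (x : X) : Prop :=
  exists M, minimal_subset T M /\ M x.

Definition S_T {X : MetricSpace} (T : X -> X) (U : X -> Prop) (delta : R) (n : nat) : Prop :=
  exists x1 x2, U x1 /\ U x2 /\ dist (iter T n x1) (iter T n x2) > delta.

Definition J_T {X : MetricSpace} (T : X -> X) (U : X -> Prop) (delta : R) (n : nat) : Prop :=
  ~ S_T T U delta n.

Definition syndetic (A : nat -> Prop) : Prop :=
  exists L : nat, forall m : nat, exists n, (m <= n <= m + L)%nat /\ A n.

Definition thick (A : nat -> Prop) : Prop :=
  forall L : nat, exists m : nat, forall k, (k <= L)%nat -> A (m + k)%nat.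

Definition Eq_syn {X : MetricSpace} (T : X -> X) (x : X) : Prop :=
  forall eps, 0 < eps -> exists U, neighborhood U x /\ syndetic (J_T T U eps).

Definition thickly_sensitive {X : MetricSpace} (T : X -> X) : Prop :=
  exists delta, 0 < delta /\ forall U, opene U -> thick (S_T T U delta).

(* Main.v *)
Require Import Defs.
From Stdlib Require Import Reals.
From Stdlib Require Import Lra Lia Classical List.

Local Notation d := Defs.dist.

Lemma ball_open (X : MetricSpace) (a : X) r : is_open (fun y => d a y < r).
Proof.
  intros x Hx. exists (r - d a x). split; [lra|].
  intros y Hy. pose proof (Defs.dist_tri _ a x y). lra.
Qed.

Lemma gt_open (X : MetricSpace) (a : X) c : is_open (fun y => c < d y a).
Proof.
  intros x Hx. exists (d x a - c). split; [lra|].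
  intros y Hy. pose proof (Defs.dist_tri _ x y a). lra.
Qed.

Lemma union_open (X : MetricSpace) (A B : X -> Prop) :
  is_open A -> is_open B -> is_open (fun x => A x \/ B x).
Proof.
  intros HA HB x [H|H].
  - destruct (HA x H) as [r [Hr Hy]]. exists r; split; auto.
  - destruct (HB x H) as [r [Hr Hy]]. exists r; split; auto.
Qed.

Lemma preim_open (X Y : MetricSpace) (f : X -> Y) (V : Y -> Prop) :
  continuous f -> is_open V -> is_open (fun x => V (f x)).
Proof.
  intros Hf HV x Hx. destruct (HV _ Hx) as [r [Hr Hy]].
  destruct (Hf x r Hr) as [dl [Hdl H]]. exists dl; split; auto.
Qed.

Lemma iter_cont (X : MetricSpace) (T : X -> X) n : continuous T -> continuous (iter T n).
Proof.
  intro HT; induction n as [|n IH]; intros x e He.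
  - exists e; split; auto.
  - destruct (HT (iter T n x) e He) as [d1 [Hd1 H1]].
    destruct (IH x d1 Hd1) as [d2 [Hd2 H2]].
    exists d2; split; auto. intros x' Hx'. apply H1, H2, Hx'.
Qed.

Lemma iter_add (X : MetricSpace) (T : X -> X) i m y :
  iter T i (iter T m y) = iter T (i + m) y.
Proof. induction i; simpl; auto. unfold iter in *; simpl. now rewrite IHi. Qed.

Lemma iter_comm (X Y : MetricSpace) (T : X -> X) (S : Y -> Y) pi :
  (forall x, pi (T x) = S (pi x)) -> forall n x, pi (iter T n x) = iter S n (pi x).
Proof.
  intros H n x; induction n; simpl; auto. unfold iter in *; simpl.
  now rewrite H, IHn.
Qed.

Lemma inv_iter (X : MetricSpace) (T : X -> X) M :
  invariant T M -> forall n y, M y -> M (iter T n y).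
Proof. intros H n y Hy; induction n; simpl; auto. Qed.

Lemma in_le_max l i : In i l -> (i <= fold_right Nat.max 0%nat l)%nat.
Proof. induction l; simpl; [tauto|]. intros [->|H]; [lia|]. specialize (IHl H); lia. Qed.

Lemma fiber_close (X Y : MetricSpace) (pi : X -> Y) (HX : compact_space X)
  (Hc : continuous pi) y0 x0 (Hfib : forall x, pi x = y0 <-> x = x0) e (He : 0 < e) :
  exists eta, 0 < eta /\ forall x, d (pi x) y0 < eta -> d x0 x < e.
Proof.
  destruct (HX nat (fun n x => d x0 x < e \/ / (INR n + 1) < d (pi x) y0)) as [l Hl].
  - intro n. apply union_open; [apply ball_open|].
    apply (preim_open _ _ pi (fun y => / (INR n + 1) < d y y0)); auto. apply gt_open.
  - intro x. destruct (Rlt_or_le (d x0 x) e) as [H|H]; [exists 0%nat; auto|].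
    assert (Hp : 0 < d (pi x) y0).
    { destruct (Defs.dist_nonneg _ (pi x) y0) as [h|h]; auto.
      symmetry in h. apply Defs.dist_eq0, Hfib in h. subst.
      assert (d x0 x0 = 0) by (apply Defs.dist_eq0; auto). lra. }
    destruct (archimed_cor1 _ Hp) as [N [HN HN0]].
    exists N; right.
    assert (0 < INR N) by (apply lt_0_INR; auto).
    assert (/ (INR N + 1) <= / INR N) by (apply Rinv_le_contravar; lra). lra.
  - set (N := fold_right Nat.max 0%nat l).
    exists (/ (INR N + 1)). split.
    { assert (0 <= INR N) by apply pos_INR. apply Rinv_0_lt_compat; lra. }
    intros x Hx. destruct (Hl x) as [i [Hi [H|H]]]; auto.
    exfalso. pose proof (le_INR _ _ (in_le_max _ _ Hi)). fold N in H0.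
    assert (0 <= INR i) by apply pos_INR.
    assert (/ (INR N + 1) <= / (INR i + 1)) by (apply Rinv_le_contravar; lra). lra.
Qed.

Lemma min_return (Y : MetricSpace) (S : Y -> Y) (HY : compact_space Y)
  (Hc : continuous S) y0 (Hmin : minimal_point S y0) r (Hr : 0 < r) :
  syndetic (fun n => d y0 (iter S n y0) < r).
Proof.
  destruct Hmin as [M [[_ [Hcl [Hinv Hdense]]] HM]].
  destruct (HY nat (fun n z => ~ M z \/ d y0 (iter S n z) < r)) as [l Hl].
  - intro n. apply union_open; [apply Hcl|].
    apply (preim_open _ _ (iter S n) (fun y => d y0 y < r)); auto.
    apply iter_cont; auto. apply ball_open.
  - intro z. destruct (classic (M z)) as [Hz|Hz]; [|exists 0%nat; auto].
    destruct (Hdense z Hz y0 HM r Hr) as [n Hn]. exists n; right.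
    rewrite Defs.dist_sym; auto.
  - exists (fold_right Nat.max 0%nat l). intro m.
    destruct (Hl (iter S m y0)) as [i [Hi [H|H]]].
    + exfalso; apply H, inv_iter; auto.
    + exists (m + i)%nat. pose proof (in_le_max _ _ Hi). split; [lia|].
      rewrite iter_add in H. rewrite Nat.add_comm; auto.
Qed.

Theorem lemma4p1 (X Y : MetricSpace) (T : X -> X) (S : Y -> Y) (pi : X -> Y)
  (HX : TDS T) (HY : TDS S) (Hpi : factor_map T S pi)
  (y0 : Y) (x0 : X)
  (Hy0eq : Eq_pt S y0) (Hy0min : minimal_point S y0)
  (Hfib : forall x, pi x = y0 <-> x = x0) :
  Eq_syn T x0 /\ ~ thickly_sensitive T.
Proof.
  destruct HX as [HXc [HTc HTs]]. destruct HY as [HYc [HSc HSs]].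
  destruct Hpi as [Hpc [Hps Hpcomm]].
  assert (Hsyn : Eq_syn T x0).
  { intros eps Heps.
    destruct (fiber_close X Y pi HXc Hpc y0 x0 Hfib (eps/2)) as [eta [Heta Hcl]]; [lra|].
    destruct (Hy0eq (eta/2)) as [dl [Hdl Heq]]; [lra|].
    exists (fun x => d y0 (pi x) < dl). split.
    - exists (fun x => d y0 (pi x) < dl). split; [|split; auto].
      + apply (preim_open _ _ pi (fun y => d y0 y < dl)); auto. apply ball_open.
      + assert (pi x0 = y0) by (apply Hfib; auto). rewrite H.
        assert (d y0 y0 = 0) by (apply Defs.dist_eq0; auto). lra.
    - destruct (min_return Y S HYc HSc y0 Hy0min (eta/2)) as [L HL]; [lra|].
      exists L; intro m. destruct (HL m) as [n [Hn Hd]]. exists n; split; auto.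
      intros [x1 [x2 [H1 [H2 Hgt]]]].
      assert (Hc : forall x, d y0 (pi x) < dl -> d x0 (iter T n x) < eps/2).
      { intros x Hx. apply Hcl. rewrite iter_comm with (S := S); auto.
        pose proof (Heq _ Hx n).
        pose proof (Defs.dist_tri _ (iter S n (pi x)) (iter S n y0) y0).
        rewrite (Defs.dist_sym _ (iter S n (pi x)) (iter S n y0)) in H0.
        rewrite (Defs.dist_sym _ (iter S n y0) y0) in H0. lra. }
      pose proof (Hc _ H1). pose proof (Hc _ H2).
      pose proof (Defs.dist_tri _ (iter T n x1) x0 (iter T n x2)).
      rewrite (Defs.dist_sym _ (iter T n x1) x0) in H3. lra. }
  split; auto.
  intros [delta [Hd Hts]].
  destruct (Hsyn delta Hd) as [U [[V [HVo [HVx HVU]]] [L HL]]].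
  destruct (Hts V (conj HVo (ex_intro _ x0 HVx)) L) as [m Hm].
  destruct (HL m) as [n [[Hn1 Hn2] HJ]]. apply HJ.
  destruct (Hm (n - m)%nat ltac:(lia)) as [a [b [Ha [Hb Hab]]]].
  replace n with (m + (n - m))%nat by lia.
  exists a, b; auto.
Qed.
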